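(* Let $B=(b_{jk})_{1\le j,k\le n}$ be a complex matrix with units on the diagonal such that $|b_{jk}|<3/2$ whenever $j<k$ and $|b_{jk}|<4^{-n}$ whenever $j>k$. Then $B$ is non-degenerate. *)

(* Defs.v *)
From HB Require Import structures.
From mathcomp Require Import all_boot all_order all_algebra.
From mathcomp Require Import complex.
From mathcomp Require Import reals.

(* Main.v *)
Require Import Defs.
From HB Require Import structures.
From mathcomp Require Import all_boot all_order all_algebra.
From mathcomp Require Import complex.
From mathcomp Require Import reals.
From mathcomp Require Import ring.
Import Order.TTheory GRing.Theory Num.Theory.
Local Open Scope ring_scope.
Local Open Scope complex_scope.

Lemma key (F : numFieldType) n (B : 'M[F]_n) (e : F) :
  0 <= e -> e * 3%:R ^+ n <= 1 ->
  (forall j, B j j = 1) ->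
  (forall j k : 'I_n, (j < k)%N -> 2%:R * `|B j k| <= 3%:R) ->
  (forall j k : 'I_n, (k < j)%N -> `|B j k| <= e) ->
  \det B != 0.
Proof.
move=> e0 e3 hd hu hl.
apply/negP => /det0P [v v0 hv].
pose a := fun j : 'I_n => (`|v 0 j| : F).
have a0 : forall j, 0 <= a j by move=> j; exact: normr_ge0.
pose S := \sum_j a j.
have S0 : 0 <= S by apply: sumr_ge0 => j _.
pose P := fun k : nat => \sum_(j : 'I_n | (j < k)%N) a j.
have P0 : forall k, 0 <= P k by move=> k; apply: sumr_ge0 => j _.
have col : forall k : 'I_n, 2%:R * a k <= 3%:R * P k + 2%:R * (e * S).
  move=> k.
  have := congr1 (fun M : 'M[F]_(1,n) => M 0 k) hv; rewrite !mxE (bigD1 k) //= hd mulr1.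
  move/eqP; rewrite addr_eq0 => /eqP hk.
  rewrite /a hk normrN.
  apply: le_trans (ler_wpM2l _ (ler_norm_sum _ _ _)) _; first by [].
  rewrite mulr_sumr.
  apply: (@le_trans _ _ (\sum_(i : 'I_n | i != k) (3%:R * (if (i < k)%N then a i else 0) + 2%:R * (e * a i)))).
    apply: ler_sum => i ik; rewrite normrM; case: ltngtP => h.
    - rewrite -[X in X <= _]addr0 mulrCA; apply: lerD; last by rewrite mulr_ge0 ?mulr_ge0 ?a0.
      by rewrite (mulrC 3%:R); apply: ler_wpM2l; [exact: a0 | exact: hu].
    - rewrite mulr0 add0r; apply: ler_wpM2l => //; rewrite mulrC; apply: ler_wpM2r; [exact: a0 | exact: hl].
    - by move: ik; rewrite (val_inj h) eqxx.
  rewrite [X in _ <= X](_ : _ = \sum_(i : 'I_n) (3%:R * (if (i < k)%N then a i else 0) + 2%:R * (e * a i))); last first.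
    by rewrite big_split -!mulr_sumr /P big_mkcond /=.
  rewrite [X in _ <= X](bigD1 k) //= lerDr.
  by rewrite addr_ge0 ?mulr_ge0 ?a0 //; case: ifP.
have Pk : forall k, (k <= n)%N -> 2%:R * P k + e * S <= e * S * 3%:R ^+ k.
  elim=> [|k IH] hk.
    rewrite /P big_pred0; last by move=> j; rewrite ltn0.
    by rewrite mulr0 add0r expr0 mulr1.
  have hk' : (k < n)%N := hk.
  pose kk := Ordinal hk'.
  have -> : P k.+1 = a kk + P k.
    rewrite /P (bigD1 kk) //=; congr (_ + _); apply: eq_bigl => j.
    rewrite ltnS leq_eqVlt -(inj_eq val_inj) /=.
    by case: eqP => [->|]; rewrite ?ltnn //= andbT.
  have c := col kk.
  have IH' := IH (ltnW hk).
  apply: (@le_trans _ _ (3%:R * P k + 2%:R * (e * S) + (2%:R * P k + e * S))).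
    by rewrite mulrDr -addrA lerD2r.
  apply: (@le_trans _ _ (3%:R * (2%:R * P k + e * S))).
    rewrite -subr_ge0.
    have -> : 3%:R * (2%:R * P k + e * S) - (3%:R * P k + 2%:R * (e * S) + (2%:R * P k + e * S)) = P k by ring.
    exact: P0.
  by rewrite exprS (mulrCA (e * S)); apply: ler_wpM2l.
have h := Pk n (leqnn n).
have PS : P n = S by rewrite /P /S; apply: eq_bigl => j; exact: ltn_ord.
rewrite PS in h.
have h2 : e * S * 3%:R ^+ n <= S.
  by rewrite mulrAC -[X in _ <= X]mul1r; apply: ler_wpM2r.
have h3 : 0 <= S - (2%:R * S + e * S) by rewrite subr_ge0; exact: le_trans h h2.
have h4 : S + e * S <= 0.
  rewrite -oppr_ge0.
  have -> : - (S + e * S) = S - (2%:R * S + e * S) by ring.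
  exact: h3.
have S00 : S = 0.
  apply: le_anti; rewrite S0 andbT; apply: le_trans h4; rewrite lerDl; exact: mulr_ge0.
move/negP: v0; apply; apply/eqP/matrixP => i j; rewrite mxE ord1.
apply/eqP; rewrite -normr_eq0; apply/eqP.
exact: (psumr_eq0P (fun j _ => a0 j) S00).
Qed.

Theorem lemma9 (R : realType) (n : nat) (B : 'M[R[i]]_n) :
  (forall j : 'I_n, B j j = 1) ->
  (forall j k : 'I_n, (j < k)%N -> `|B j k| < 3%:R / 2%:R) ->
  (forall j k : 'I_n, (k < j)%N -> `|B j k| < (4%:R ^+ n)^-1) ->
  \det B != 0.
Proof.
move=> hd hu hl; apply: (@key _ n B ((4%:R ^+ n)^-1)) => //.
- by rewrite invr_ge0 exprn_ge0.
- have h3 : forall m, (3 ^ m <= 4 ^ m)%N by elim=> // m IH; rewrite !expnS leq_mul.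
  rewrite mulrC ler_pdivrMr ?exprn_gt0 // mul1r -!natrX ler_nat; exact: h3.
- move=> j k jk; rewrite mulrC -ler_pdivlMr //; exact: ltW (hu j k jk).
- by move=> j k kj; exact: ltW (hl j k kj).
Qed.
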